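(* Let $n$ be a positive integer. There exists a positive integer $k$ such that the complete graph $K_n$ is a prime $k$th-power distance graph if and only if $n<7$.
   Context: A graph $G$ is a prime $k$th-power distance graph if there is an injective map $L:V(G)\to\mathbb{Z}$ such that for every edge $uv$ of $G$, $|L(u)-L(v)|=p^j$ for some prime $p$ and some positive integer $j\le k$. *)

(* Defs.v *)
From mathcomp Require Import all_boot all_order all_algebra.
Set Implicit Arguments. Unset Strict Implicit. Unset Printing Implicit Defensive.
Import Order.TTheory GRing.Theory Num.Theory.

Definition prime_kth_power_distance_graph (T : finType) (e : rel T) (k : nat) : Prop :=
  exists L : T -> int, injective L /\
    forall u v : T, e u v ->
      exists p j : nat, [/\ prime p, 0 < j, j <= k & `|L u - L v|%R = Posz (p ^ j)].

Definition complete_graph_rel (n : nat) : rel 'I_n := fun u v => u != v.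

(* Main.v *)
Require Import Defs.
From mathcomp Require Import all_boot all_order all_algebra.
Import Order.TTheory GRing.Theory Num.Theory.

Lemma no6 (p j : nat) : prime p -> 0 < j -> ~~ (6 %| p ^ j).
Proof.
move=> pp j0; apply/negP => h.
have h2 : 2 %| p ^ j := dvdn_trans (isT : 2 %| 6) h.
have h3 : 3 %| p ^ j := dvdn_trans (isT : 3 %| 6) h.
rewrite Euclid_dvdX // in h2; rewrite Euclid_dvdX // in h3.
case/andP: h2 => h2 _; case/andP: h3 => h3 _.
case/primeP: pp => _ H.
move: (H 2 h2) (H 3 h3) => /= /eqP <- /eqP.
by [].
Qed.

Lemma hard (n : nat) (k : nat) :
  prime_kth_power_distance_graph (@complete_graph_rel n) k -> n <= 6.
Proof.
case=> L [injL HL].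
pose f := fun i : 'I_n => (inord (absz (L i %% 6)%Z) : 'I_6).
have lt6 : forall i, (absz (L i %% 6)%Z < 6)%N.
  move=> i.
  have h0 : (0 <= (L i %% 6)%Z)%R by apply: modz_ge0.
  have h1 : ((L i %% 6)%Z < 6)%R by apply: ltz_pmod.
  by rewrite -ltz_nat abszE ger0_norm.
have finj : injective f.
  move=> i j /(congr1 (@nat_of_ord 6)); rewrite /f !inordK ?lt6 // => eqa.
  apply/eqP; apply: contraT => nij.
  have [p [m [pp m0 _ hd]]] := HL i j nij.
  have hm : (L i = L j %[mod 6])%Z.
    have h0 : (0 <= (L i %% 6)%Z)%R by apply: modz_ge0.
    have h0' : (0 <= (L j %% 6)%Z)%R by apply: modz_ge0.
    by rewrite -(ger0_norm h0) -(ger0_norm h0') -!abszE eqa.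
  move/eqP: hm; rewrite eqz_mod_dvd /dvdz => h.
  have e : absz (L i - L j)%R = p ^ m.
    by apply/eqP; rewrite -eqz_nat abszE hd.
  have h6 : 6 %| p ^ m by rewrite -e; exact: h.
  by move: (@no6 p m pp m0); rewrite h6.
by have := @leq_card _ _ f finj; rewrite !card_ord.
Qed.

Definition labs : seq int := [:: 0; 2; 4; 7; 9; 11]%R.

Lemma pairs (a b : nat) : a < 6 -> b < 6 -> a != b ->
  exists p j : nat, [/\ prime p, 0 < j, j <= 2 &
     `|nth 0%R labs a - nth 0%R labs b|%R = Posz (p ^ j)].
Proof.
move=> ha hb hab; move: ha hb hab.
do 6? (case: a => [|a]); do 6? (case: b => [|b]); rewrite //= => _ _ _;
 rewrite /labs /=;
 first [ by exists 2, 1 | by exists 2, 2 | by exists 3, 1 | by exists 3, 2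
       | by exists 5, 1 | by exists 7, 1 | by exists 11, 1 ].
Qed.

Theorem mainTheorem10 (n : nat) (hn : 0 < n) :
  (exists k : nat, 0 < k /\ prime_kth_power_distance_graph (@complete_graph_rel n) k)
  <-> n < 7.
Proof.
split.
  by case=> k [_ H]; rewrite ltnS; apply: hard H.
move=> n7; exists 2; split => //.
exists (fun i : 'I_n => nth 0%R labs i); split.
  move=> i j /eqP; rewrite nth_uniq //.
  - by move/eqP/val_inj.
  - by apply: leq_trans (ltn_ord i) _.
  - by apply: leq_trans (ltn_ord j) _.
move=> u v huv.
apply: pairs.
- by apply: leq_trans (ltn_ord u) _.
- by apply: leq_trans (ltn_ord v) _.
- exact: huv.
Qed.
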